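(* Let $f,g:\mathbb{R}^n\to\mathbb{R}$ satisfy assumptions (A1)–(A4) below, let $\zeta\in[0,1)$ be fixed and $x_0\in\Omega=\{x:g(x)\le0\}$. Then the constraint function $g$ decreases along the trajectory $x(t;\zeta,x_0)$ outside the neighborhood $\Theta_\zeta$, and increases along it inside $\Theta_\zeta$, where $\Theta_\zeta=\{x:\cos\theta(x)<-\zeta,\ x\in\Omega_{f(x_0)}\}$.
   Context: Assumptions: (A1) $\lim_{|x|\to\infty} f(x)=+\infty$; (A2) $\nabla f(x)\neq 0$ for all $x\in\Omega$; (A3) $\nabla g(x)\neq 0$ for all $x\in\Omega$; (A4) $f,g$ twice continuously differentiable. $\cos\theta(x)=\frac{\langle\nabla f(x),\nabla g(x)\rangle}{|\nabla f(x)||\nabla g(x)|}$; $\Omega_{f(x_0)}=\{x: f(x)\le f(x_0),\ g(x)\le 0\}$. For $\zeta\in[0,1)$, $\mathbf{s}_\zeta(x)=-\frac{\nabla f(x)}{|\nabla f(x)|}-\zeta\frac{\nabla g(x)}{|\nabla g(x)|}$, and $x(t;\zeta,x_0)$ is the solution of $\frac{dx}{dt}=\mathbf{s}_\zeta(x)$, $x(0)=x_0$, on its maximal interval of existence in $E=\{x:\nabla f(x)\ne0,\nabla g(x)\ne0\}$. *)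

(* Defs.v *)
From HB Require Import structures.
From mathcomp Require Import all_boot all_order all_algebra.
From mathcomp Require Import all_classical all_reals all_analysis.
Set Implicit Arguments. Unset Strict Implicit. Unset Printing Implicit Defensive.
Import Order.TTheory GRing.Theory Num.Theory.
Import numFieldNormedType.Exports.
Local Open Scope classical_set_scope.
Local Open Scope ring_scope.

Section Defs.
Variables (R : realType) (n : nat).
Implicit Types (f g : 'rV[R]_n -> R) (u v x : 'rV[R]_n).

Definition dotp u v : R := \sum_(i < n) u 0 i * v 0 i.
Definition enorm u : R := Num.sqrt (dotp u u).

Definition partial f (i : 'I_n) x : R := 'D_(delta_mx 0 i) f x.

Definition grad f x : 'rV[R]_n := \row_i partial f i x.

Definition C2 f : Prop :=
  (forall x, differentiable f x) /\
  (forall i x, differentiable (partial f i) x) /\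
  (forall i j, continuous (partial (partial f i) j)).

(* (A1): lim_{|x| -> oo} f(x) = +oo *)
Definition coercive f : Prop :=
  forall M : R, exists r : R, forall x, r < enorm x -> M < f x.

Definition Omega g : set 'rV[R]_n := [set x | g x <= 0].

Definition Omega_lev f g (c : R) : set 'rV[R]_n := [set x | f x <= c /\ g x <= 0].

Definition cos_theta f g x : R :=
  dotp (grad f x) (grad g x) / (enorm (grad f x) * enorm (grad g x)).

Definition Eset f g : set 'rV[R]_n := [set x | grad f x != 0 /\ grad g x != 0].

Definition s_field f g (zeta : R) x : 'rV[R]_n :=
  - ((enorm (grad f x))^-1 *: grad f x) - zeta *: ((enorm (grad g x))^-1 *: grad g x).

Definition Theta f g (zeta : R) x0 : set 'rV[R]_n :=
  [set x | cos_theta f g x < - zeta /\ Omega_lev f g (f x0) x].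

Definition is_solution f g (zeta : R) x0 (I : set R) (x : R -> 'rV[R]_n) : Prop :=
  (exists a b : \bar R, (a < 0%:E)%E /\ (0%:E < b)%E /\
     I = [set t : R | (a < t%:E)%E /\ (t%:E < b)%E]) /\
  x 0 = x0 /\
  (forall t, I t -> Eset f g (x t) /\ is_derive t 1 x (s_field f g zeta (x t))).

Definition is_maximal_solution f g (zeta : R) x0 (I : set R) (x : R -> 'rV[R]_n) : Prop :=
  is_solution f g zeta x0 I x /\
  (forall (J : set R) (y : R -> 'rV[R]_n), is_solution f g zeta x0 J y ->
     I `<=` J -> (forall t, I t -> y t = x t) -> J `<=` I).

End Defs.

(* Main.v *)
Require Import Defs.
From HB Require Import structures.
From mathcomp Require Import all_boot all_order all_algebra.
From mathcomp Require Import all_classical all_reals all_analysis.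
From mathcomp Require Import ring lra.
Import Order.TTheory GRing.Theory Num.Theory.
Import numFieldNormedType.Exports.
Local Open Scope classical_set_scope.
Local Open Scope ring_scope.

Lemma dotp_pos (R : realType) (n : nat) (u : 'rV[R]_n) : u != 0 -> 0 < dotp u u.
Proof.
move=> u0; rewrite /dotp lt_def sumr_ge0 ?andbT; last by move=> i _; rewrite -expr2 sqr_ge0.
apply: contra u0 => /eqP /psumr_eq0P H; apply/eqP/rowP => i; rewrite mxE.
apply/eqP; rewrite -sqrf_eq0 expr2; apply/eqP; apply: H => // j _.
by rewrite -expr2 sqr_ge0.
Qed.

Lemma enorm_pos (R : realType) (n : nat) (u : 'rV[R]_n) : u != 0 -> 0 < enorm u.
Proof. by move=> u0; rewrite /enorm sqrtr_gt0 dotp_pos. Qed.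

Lemma diff_dotp (R : realType) (n : nat) (g : 'rV[R]_n -> R) y v :
  (forall z, differentiable g z) -> 'd g y v = dotp v (grad g y).
Proof.
move=> dg; rewrite {1}(row_sum_delta v) linear_sum /dotp.
apply: eq_bigr => i _; rewrite linearZ /= mxE /partial deriveE //.
Qed.

Theorem lemma5p6 (R : realType) (n : nat) (f g : 'rV[R]_n -> R)
  (zeta : R) (x0 : 'rV[R]_n) (I : set R) (x : R -> 'rV[R]_n) :
  coercive f ->
  (forall y, Omega g y -> grad f y != 0) ->
  (forall y, Omega g y -> grad g y != 0) ->
  C2 f -> C2 g ->
  0 <= zeta -> zeta < 1 ->
  Omega g x0 ->
  is_maximal_solution f g zeta x0 I x ->
  forall t, I t ->
    derivable (g \o x) t 1 /\
    (Theta f g zeta x0 (x t) -> 0 < 'D_1 (g \o x) t) /\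
    (Omega_lev f g (f x0) (x t) -> ~ Theta f g zeta x0 (x t) ->
       'D_1 (g \o x) t <= 0).
Proof.
move=> _ _ _ _ [dg _] z0 _ _ [[_ [_ hsol]] _] t It.
have [[nf ng] hd] := hsol t It.
have dx : differentiable x t by apply/derivable1_diffP; by case: hd.
have dgx : differentiable (g \o x) t by apply: differentiable_comp.
have key : 'D_1 (g \o x) t =
   enorm (grad g (x t)) * (- cos_theta f g (x t) - zeta).
  rewrite deriveE // diff_comp //=.
  rewrite -(@deriveE _ _ _ x t 1 dx) (@derive_val _ _ _ _ _ _ _ hd) diff_dotp //.
  have pa := enorm_pos _ _ _ nf; have pb := enorm_pos _ _ _ ng.
  have hb : dotp (grad g (x t)) (grad g (x t)) = enorm (grad g (x t)) ^+ 2.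
    by rewrite sqr_sqrtr // ltW // dotp_pos.
  rewrite /cos_theta.
  move: pa pb hb; set a := enorm _; set b := enorm _; set F := grad f _; set G := grad g _.
  move=> pa pb hb.
  rewrite /s_field -/a -/b -/F -/G /dotp.
  rewrite (eq_bigr (fun i => - a^-1 * (F 0 i * G 0 i) - zeta * b^-1 * (G 0 i * G 0 i))); last first.
    by move=> i _; rewrite !mxE; ring.
  rewrite big_split /= sumrN -!mulr_sumr -/(dotp F G) -/(dotp G G) hb.
  by field; rewrite !gt_eqF.
split; first by apply/derivable1_diffP.
split.
  move=> [hc _]; rewrite key mulr_gt0 ?(enorm_pos _ _ _ ng) // subr_gt0 ltrNr //.
move=> hO hT; rewrite key pmulr_rle0 ?(enorm_pos _ _ _ ng) // subr_le0 lerNl leNgt.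
by apply/negP => hc; apply: hT.
Qed.
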